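(* Let $n$ be a positive integer, let $R_1,R_2,\dots,R_{n+1}$ be commutative rings and let $R=R_1\times R_2\times\cdots\times R_{n+1}$. Then every proper ideal of $R$ is a weakly $n$-absorbing ideal of $R$ if and only if all of the $R_i$'s are fields.
   Context: All rings are commutative with $1\neq0$. A proper ideal $I$ of $R$ is weakly $n$-absorbing if whenever $0\neq a_1\cdots a_{n+1}\in I$ with $a_1,\dots,a_{n+1}\in R$, there are $n$ of the $a_i$'s whose product is in $I$. *)

(* Defs.v *)
From HB Require Import structures.
From mathcomp Require Import all_boot all_order all_algebra.
Set Implicit Arguments. Unset Strict Implicit. Unset Printing Implicit Defensive.
Import GRing.Theory.
Local Open Scope ring_scope.

Definition is_ideal (R : comPzRingType) (I : R -> Prop) : Prop :=
  [/\ I 0,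
      (forall x y, I x -> I y -> I (x + y)) &
      (forall r x, I x -> I (r * x))].

Definition is_proper_ideal (R : comPzRingType) (I : R -> Prop) : Prop :=
  is_ideal I /\ exists x, ~ I x.

Definition weakly_n_absorbing (R : comPzRingType) (n : nat) (I : R -> Prop)
  : Prop :=
  is_proper_ideal I /\
  forall a : 'I_n.+1 -> R,
    \prod_(i < n.+1) a i != 0 -> I (\prod_(i < n.+1) a i) ->
    exists j : 'I_n.+1, I (\prod_(i < n.+1 | i != j) a i).

Definition is_field (F : comNzRingType) : Prop :=
  forall x : F, x != 0 -> exists y : F, x * y = 1.

Section DProd.
Variables (I : finType) (R : I -> comNzRingType).

Definition dprod := {dffun forall i : I, R i}.
HB.instance Definition _ := Choice.on dprod.

Definition dp_zero : dprod := [ffun i => 0].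
Definition dp_one : dprod := [ffun i => 1].
Definition dp_add (f g : dprod) : dprod := [ffun i => f i + g i].
Definition dp_opp (f : dprod) : dprod := [ffun i => - f i].
Definition dp_mul (f g : dprod) : dprod := [ffun i => f i * g i].

Fact dp_addA : associative dp_add.
Proof. by move=> f g h; apply/ffunP=> i; rewrite !ffunE addrA. Qed.
Fact dp_addC : commutative dp_add.
Proof. by move=> f g; apply/ffunP=> i; rewrite !ffunE addrC. Qed.
Fact dp_add0 : left_id dp_zero dp_add.
Proof. by move=> f; apply/ffunP=> i; rewrite !ffunE add0r. Qed.
Fact dp_addN : left_inverse dp_zero dp_opp dp_add.
Proof. by move=> f; apply/ffunP=> i; rewrite !ffunE addNr. Qed.

HB.instance Definition _ := GRing.isZmodule.Build dprod
  dp_addA dp_addC dp_add0 dp_addN.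

Fact dp_mulA : associative dp_mul.
Proof. by move=> f g h; apply/ffunP=> i; rewrite !ffunE mulrA. Qed.
Fact dp_mulC : commutative dp_mul.
Proof. by move=> f g; apply/ffunP=> i; rewrite !ffunE mulrC. Qed.
Fact dp_mul1 : left_id dp_one dp_mul.
Proof. by move=> f; apply/ffunP=> i; rewrite !ffunE mul1r. Qed.
Fact dp_mulD : left_distributive dp_mul (@GRing.add dprod).
Proof. by move=> f g h; apply/ffunP=> i; rewrite !ffunE mulrDl. Qed.

HB.instance Definition _ := GRing.Zmodule_isComPzRing.Build dprod
  dp_mulA dp_mulC dp_mul1 dp_mulD.

Lemma dprod_addE (f g : dprod) i : (f + g) i = f i + g i.
Proof. by rewrite ffunE. Qed.
Lemma dprod_mulE (f g : dprod) i : (f * g) i = f i * g i.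
Proof. by rewrite ffunE. Qed.
Lemma dprod_zeroE i : (0 : dprod) i = 0.
Proof. by rewrite ffunE. Qed.
Lemma dprod_oneE i : (1 : dprod) i = 1.
Proof. by rewrite ffunE. Qed.

End DProd.

(* Main.v *)
Require Import Defs.
From HB Require Import structures.
From mathcomp Require Import all_boot all_order all_algebra.
From Stdlib Require Import Classical.
Set Implicit Arguments. Unset Strict Implicit. Unset Printing Implicit Defensive.
Import GRing.Theory.
Local Open Scope ring_scope.

Section Aux.
Variables (T : finType) (R : T -> comNzRingType).

Lemma dp_prodE (J : Type) (r : seq J) (P : pred J) (F : J -> dprod R) i :
  (\prod_(j <- r | P j) F j) i = \prod_(j <- r | P j) F j i.
Proof.
apply: (big_morph (fun f : dprod R => f i)).
  by move=> f g; rewrite dprod_mulE.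
by rewrite dprod_oneE.
Qed.

Lemma dp_sumE (J : Type) (r : seq J) (P : pred J) (F : J -> dprod R) i :
  (\sum_(j <- r | P j) F j) i = \sum_(j <- r | P j) F j i.
Proof.
apply: (big_morph (fun f : dprod R => f i)).
  by move=> f g; rewrite dprod_addE.
by rewrite dprod_zeroE.
Qed.

Definition inj (k : T) (y : R k) : dprod R :=
  [ffun i => match k =P i with ReflectT e => eq_rect k R y i e | ReflectF _ => 0 end].
Arguments inj : clear implicits.

Lemma inj_at k y : inj k y k = y.
Proof. rewrite /inj ffunE; case: eqP => // e; by rewrite (eq_axiomK e). Qed.

Lemma inj_off k y i : i != k -> inj k y i = 0.
Proof. move=> h; rewrite /inj ffunE; case: eqP => // e; by rewrite e eqxx in h. Qed.

Definition ee (k : T) : dprod R := inj k 1.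

Lemma ideal_closed (I : dprod R -> Prop) (y : dprod R) :
  is_ideal I -> (forall k, y k != 0 -> I (ee k)) -> I y.
Proof.
case=> I0 ID IM H.
have -> : y = \sum_k y * ee k.
  rewrite -mulr_sumr -[LHS]mulr1; congr (_ * _); apply/ffunP => i.
  rewrite dp_sumE dprod_oneE (bigD1 i) //= big1 ?addr0 /ee ?inj_at //.
  by move=> j hj; rewrite inj_off // eq_sym.
apply: (big_ind I) => // k _.
have [hk|hk] := eqVneq (y k) 0.
  suff -> : y * ee k = 0 by [].
  apply/ffunP => i; rewrite dprod_mulE dprod_zeroE.
  have [->|hi] := eqVneq i k; first by rewrite hk mul0r.
  by rewrite /ee inj_off // mulr0.
by apply: IM; apply: H.
Qed.

End Aux.
Arguments inj {T R} k y.
Arguments ee {T R} k.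


Lemma dp_oppE (T : finType) (R : T -> comNzRingType) (f : dprod R) i : (- f) i = - f i.
Proof. by rewrite ffunE. Qed.

Lemma fwd n (R : 'I_n.+1 -> comNzRingType) (hf : forall i, is_field (R i))
  (I : dprod R -> Prop) : is_proper_ideal I -> weakly_n_absorbing n I.
Proof.
move=> hI; split=> // a p0 pI.
have hid := hI.1.
case: hI => [[I0 ID IM] [x0 nx0]].
have L2 : forall (x : dprod R) k, I x -> x k != 0 -> I (ee k).
  move=> x k Ix hk; have [w hw] := hf k _ hk.
  have -> : ee k = inj k w * x.
    apply/ffunP=> i; rewrite dprod_mulE.
    case: (eqVneq i k) => [->|hik]; first by rewrite /ee !inj_at mulrC.
    by rewrite /ee !inj_off // mul0r.
  by apply: IM.
set p := \prod_(i < n.+1) a i in p0 pI.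
have [m hm] : exists m, p m != 0.
  case: (pickP (fun m => p m != 0)) => [m hm|h]; first by exists m.
  case/negP: p0; apply/eqP/ffunP => k; rewrite dprod_zeroE.
  by move/negbFE/eqP: (h k).
have nodiv : forall k (f : 'I_n.+1 -> R k), \prod_i f i = 0 -> exists i, f i = 0.
  move=> k f hp; case: (pickP (fun i => f i == 0)) => [i /eqP hi|h]; first by exists i.
  suff : \prod_i f i != 0 by rewrite hp eqxx.
  apply: (big_ind (fun x => x != 0)); first exact: oner_neq0.
    move=> u v hu hv; apply/eqP=> huv.
    have [w hw] := hf k _ hu.
    move/eqP: hv; apply; by rewrite -[v]mul1r -hw mulrAC huv mul0r.
  by move=> i _; rewrite h.
pose Z := [set k | p k == 0].
pose g k := odflt ord0 [pick i | a i k == 0].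
pose S := [set g k | k in Z].
have hS : (#|S| < n.+1)%N.
  apply: (leq_ltn_trans (leq_imset_card _ _)).
  have : Z \subset [set~ m].
    apply/subsetP => k; rewrite !inE => hk; apply/eqP => ekm.
    by move: hm; rewrite -ekm (eqP hk) eqxx.
  move/subset_leq_card; rewrite cardsC1 card_ord /=.
  by move=> h; apply: (leq_ltn_trans h).
have [j hj] : exists j, j \notin S.
  case: (pickP (fun j => j \notin S)) => [j hj|h]; first by exists j.
  have : [set: 'I_n.+1] \subset S.
    by apply/subsetP=> k _; move/negbFE: (h k).
  by move/subset_leq_card; rewrite cardsT card_ord leqNgt hS.
exists j; apply: ideal_closed => // k hk.
rewrite dp_prodE in hk.
case: (eqVneq (p k) 0) => hpk; last by apply: (L2 p).
case: (pickP (fun i => a i k == 0)) => [i0 hi0|hnone].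
  have : g k \in S by apply: imset_f; rewrite inE hpk.
  rewrite /g; case: pickP => [i1 /eqP hi1 hin|h]; last by rewrite h in hi0.
  have hij : i1 != j by apply: contraNneq hj => <-.
  by move: hk; rewrite (bigD1 i1) //= hi1 mul0r eqxx.
move: hpk; rewrite /p dp_prodE => /nodiv [i hi].
by move: (hnone i); rewrite hi eqxx.
Qed.

Lemma bwd n (R : 'I_n.+1 -> comNzRingType) :
  (forall I : dprod R -> Prop, is_proper_ideal I -> weakly_n_absorbing n I) ->
  forall t, is_field (R t).
Proof.
move=> H t x hx; apply: NNPP => hno.
pose I := fun y : dprod R => (exists r, y t = r * x) /\ forall k, k != t -> y k = 0.
have hI : is_proper_ideal I.
  split; last first.
    exists 1 => -[[r hr] _]; apply: hno; exists r.
    by rewrite mulrC -hr dprod_oneE.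
  split.
  - split; first by exists 0; rewrite dprod_zeroE mul0r.
    by move=> k _; rewrite dprod_zeroE.
  - move=> y z [[r1 h1] h1'] [[r2 h2] h2']; split.
      by exists (r1 + r2); rewrite dprod_addE h1 h2 mulrDl.
    by move=> k hk; rewrite dprod_addE h1' // h2' // addr0.
  - move=> r y [[r1 h1] h1']; split.
      by exists (r t * r1); rewrite dprod_mulE h1 mulrA.
    by move=> k hk; rewrite dprod_mulE h1' // mulr0.
have [_ W] := H I hI.
pose a i : dprod R := if i == t then 1 + inj t (x - 1) else 1 - ee i.
have a_off : forall i k, i != k -> a i k = 1.
  move=> i k hik; rewrite /a; case: (eqVneq i t) => [eit|nit].
    by rewrite dprod_addE dprod_oneE inj_off ?addr0 // -eit eq_sym.
  by rewrite dprod_addE dp_oppE dprod_oneE /ee inj_off ?subr0 // eq_sym.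
have a_t : a t t = x.
  by rewrite /a eqxx dprod_addE dprod_oneE inj_at addrC subrK.
have a_k : forall k, k != t -> a k k = 0.
  by move=> k nkt; rewrite /a (negbTE nkt) dprod_addE dp_oppE dprod_oneE /ee inj_at subrr.
have q1 : forall k, \prod_(i < n.+1 | i != k) a i k = 1.
  by move=> k; apply: big1 => i hi; apply: a_off.
have p_t : (\prod_(i < n.+1) a i) t = x.
  by rewrite dp_prodE (bigD1 t) //= q1 mulr1 a_t.
have p_k : forall k, k != t -> (\prod_(i < n.+1) a i) k = 0.
  by move=> k hk; rewrite dp_prodE (bigD1 k) //= q1 mulr1 a_k.
have hp0 : \prod_(i < n.+1) a i != 0.
  apply/eqP => /(congr1 (fun f : dprod R => f t)).
  by rewrite p_t dprod_zeroE; apply/eqP.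
have hpI : I (\prod_(i < n.+1) a i).
  split; first by exists 1; rewrite p_t mul1r.
  by move=> k hk; rewrite p_k.
have [j [[r hr] hj]] := W a hp0 hpI.
case: (eqVneq j t) => [ejt|njt].
  by apply: hno; exists r; move: hr; rewrite ejt dp_prodE q1 mulrC.
by move: (hj j njt); rewrite dp_prodE q1; apply/eqP; exact: oner_neq0.
Qed.

Theorem mainTheorem10 (n : nat) (R : 'I_n.+1 -> comNzRingType) :
  (0 < n)%N ->
  ((forall I : dprod R -> Prop, is_proper_ideal I -> weakly_n_absorbing n I)
   <-> (forall i : 'I_n.+1, is_field (R i))).
Proof.
move=> _; split; first exact: bwd.
by move=> hf I; apply: fwd.
Qed.
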